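(* Fix $n\ge0$. For every formula $\phi\in\mathcal{L}^1$ and every label $w$, the computation of $\mathtt{Prove_n}(w:\phi)$ terminates.
   Context: Single-agent setting: $Ag=\{1\}$. Formulas $\phi ::= p \mid \overline{p} \mid (\phi\wedge\phi) \mid (\phi\vee\phi) \mid \Box\phi \mid \Diamond\phi \mid [1]\phi \mid \langle 1\rangle\phi$; $\overline{\phi}$ swaps $p/\overline{p}$, $\wedge/\vee$, $\Box/\Diamond$, $[1]/\langle 1\rangle$. A labelled sequent $\mathcal{R},\Gamma$ consists of relational atoms $\mathcal{R}_1xy$ and labelled formulas $x:\phi$. Graphs. $G(\Lambda)$ has the labels of $\Lambda$ as vertices and an edge $(x,y)$ for each $\mathcal{R}_1xy\in\Lambda$. A tree is a graph with a root having exactly one directed path to every other node; a forest is a disjoint union of trees. $\Lambda$ is forestlike iff $G(\Lambda)$ is a forest; its trees are choice-trees; $CT(w)$ is the choice-tree containing $w$. For forestlike $\Lambda$ and label $w$: $w$ is saturated iff (i) $w:\phi\in\Lambda$ implies $w:\overline{\phi}\notin\Lambda$, (ii) $w:\phi\vee\psi\in\Lambda$ implies $w:\phi,w:\psi\in\Lambda$, (iii) $w:\phi\wedge\psi\in\Lambda$ implies $w:\phi\in\Lambda$ or $w:\psi\in\Lambda$. $w$ is $\Box$-realized iff for each $w:\Box\phi\in\Lambda$ some label $u$ has $u:\phi\in\Lambda$; $[1]$-realized iff for each $w:[1]\phi\in\Lambda$ some $u\in CT(w)$ has $u:\phi\in\Lambda$; $\Diamond$-propagated iff for each $w:\Diamond\phi\in\Lambda$,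 $u:\phi\in\Lambda$ for all labels $u$; $\langle1\rangle$-propagated iff for each $w:\langle1\rangle\phi\in\Lambda$, $u:\phi\in\Lambda$ for all $u\in CT(w)$. $\Lambda$ is $n$-choice consistent ($n>0$) iff $G(\Lambda)$ has at most $n$ choice-trees. $\Lambda$ is stable iff all labels are saturated, $\Box$- and $[1]$-realized, $\Diamond$- and $\langle1\rangle$-propagated, and (when $n>0$) $\Lambda$ is $n$-choice consistent. Algorithm $\mathtt{Prove_n}(\mathcal{R},\Gamma)$, steps tried in order: 1. If $w:p$ and $w:\overline{p}$ are both present, return true. 2. If the sequent is stable, return false. 3. If some $w$ is not saturated: (i) if $w:\phi\vee\psi$ is present but $w:\phi$ or $w:\psi$ absent, return $\mathtt{Prove_n}(\mathcal{R},w:\phi,w:\psi,\Gamma)$; (ii) if $w:\phi\wedge\psi$ is present but neither $w:\phi$ nor $w:\psi$, return false if $\mathtt{Prove_n}(\mathcal{R},w:\phi,\Gamma)$ or $\mathtt{Prove_n}(\mathcal{R},w:\psi,\Gamma)$ returns false, else true. 4. If some $w:\langle1\rangle\phi$ is present and some $u\in CT(w)$ has $u:\phi$ absent, return $\mathtt{Prove_n}(\mathcal{R},u:\phi,\Gamma)$. 5. If some $w:\Diamond\phi$ is present and some label $u$ has $u:\phi$ absent, return $\mathtt{Prove_n}(\mathcal{R},u:\phi,\Gamma)$. 6. If some $w:[1]\phi$ is present with $u:\phi$ absent for all $u\in CT(w)$, return $\mathtt{Prove_n}(\mathcal{R},\mathcal{R}_1wv,v:\phi,\Gamma)$, $v$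 fresh. 7. If some $w:\Box\phi$ is present with $u:\phi$ absent for all labels $u$, return $\mathtt{Prove_n}(\mathcal{R},v:\phi,\Gamma)$, $v$ fresh. 8. (Only when $n>0$.) If not $n$-choice consistent, pick distinct choice-tree roots $w_0,\dots,w_n$ and return false if $\mathtt{Prove_n}(\mathcal{R},\mathcal{R}_1w_kw_j,\Gamma)$ returns false for some $0\le k\le n-1$, $k+1\le j\le n$, else true. For $n=0$ step 8 is absent and stability omits $n$-choice consistency. *)

(* Defs.v *)
(* Formalization of the proof-search procedure Prove_n for the
   single-agent logic (Ag = {1}) as a (nondeterministic) call relation on
   labelled sequents; termination = well-foundedness (Acc) of the call
   relation from the initial sequent. *)
From Stdlib Require Import List Arith Relations.
Import ListNotations.

Inductive form : Type :=
  | Var   (p : nat)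
  | NVar  (p : nat)
  | And   (a b : form)
  | Or    (a b : form)
  | Box   (a : form)
  | Dia   (a : form)
  | Stit  (a : form)           (* [1] *)
  | CStit (a : form).          (* <1> *)

Fixpoint neg (f : form) : form :=
  match f with
  | Var p => NVar p
  | NVar p => Var p
  | And a b => Or (neg a) (neg b)
  | Or a b => And (neg a) (neg b)
  | Box a => Dia (neg a)
  | Dia a => Box (neg a)
  | Stit a => CStit (neg a)
  | CStit a => Stit (neg a)
  end.

(* A labelled sequent R,Gamma is a pair of the
   list of relational atoms R_1 x y (as pairs (x,y)) and the list of labelled
   formulas x:phi (as pairs (x,phi)); only membership matters. *)
Definition sequent : Type := (list (nat * nat) * list (nat * form))%type.

Definition present (S : sequent) (x : nat) (f : form) : Prop := In (x, f) (snd S).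
Definition edge (S : sequent) (x y : nat) : Prop := In (x, y) (fst S).

Definition label (S : sequent) (x : nat) : Prop :=
  (exists y, edge S x y \/ edge S y x) \/ (exists f, present S x f).

Definition reach (S : sequent) : nat -> nat -> Prop := clos_refl_trans nat (edge S).

Definition is_root (S : sequent) (r : nat) : Prop :=
  label S r /\ forall x, ~ edge S x r.

Definition inCT (S : sequent) (w u : nat) : Prop :=
  exists r, is_root S r /\ reach S r w /\ reach S r u.

Definition saturated (S : sequent) (w : nat) : Prop :=
  (forall f, present S w f -> ~ present S w (neg f)) /\
  (forall a b, present S w (Or a b) -> present S w a /\ present S w b) /\
  (forall a b, present S w (And a b) -> present S w a \/ present S w b).

Definition box_realized (S : sequent) (w : nat) : Prop :=
  forall f, present S w (Box f) -> exists u, label S u /\ present S u f.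

Definition stit_realized (S : sequent) (w : nat) : Prop :=
  forall f, present S w (Stit f) -> exists u, inCT S w u /\ present S u f.

Definition dia_propagated (S : sequent) (w : nat) : Prop :=
  forall f, present S w (Dia f) -> forall u, label S u -> present S u f.

Definition cstit_propagated (S : sequent) (w : nat) : Prop :=
  forall f, present S w (CStit f) -> forall u, inCT S w u -> present S u f.

(* n-choice consistency: G(S) has at most n choice-trees, i.e. there are no
   n+1 distinct choice-tree roots. *)
Definition choice_consistent (n : nat) (S : sequent) : Prop :=
  ~ exists ws : list nat, length ws = Datatypes.S n /\ NoDup ws /\ Forall (is_root S) ws.

Definition stable (n : nat) (S : sequent) : Prop :=
  (forall w, label S w ->
     saturated S w /\ box_realized S w /\ stit_realized S w /\
     dia_propagated S w /\ cstit_propagated S w) /\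
  (0 < n -> choice_consistent n S).

Definition clash (S : sequent) : Prop :=
  exists w p, present S w (Var p) /\ present S w (NVar p).

Definition or_case (S : sequent) (w : nat) (a b : form) : Prop :=
  present S w (Or a b) /\ ~ (present S w a /\ present S w b).
Definition and_case (S : sequent) (w : nat) (a b : form) : Prop :=
  present S w (And a b) /\ ~ present S w a /\ ~ present S w b.

Definition step3_app (S : sequent) : Prop :=
  exists w, (exists a b, or_case S w a b) \/ (exists a b, and_case S w a b).
Definition step3_call (S S' : sequent) : Prop :=
  exists w,
    (exists a b, or_case S w a b /\ S' = (fst S, (w, a) :: (w, b) :: snd S)) \/
    ((~ exists a b, or_case S w a b) /\
     exists a b, and_case S w a b /\
       (S' = (fst S, (w, a) :: snd S) \/ S' = (fst S, (w, b) :: snd S))).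

Definition step4_app (S : sequent) : Prop :=
  exists w f u, present S w (CStit f) /\ inCT S w u /\ ~ present S u f.
Definition step4_call (S S' : sequent) : Prop :=
  exists w f u, present S w (CStit f) /\ inCT S w u /\ ~ present S u f /\
    S' = (fst S, (u, f) :: snd S).

Definition step5_app (S : sequent) : Prop :=
  exists w f u, present S w (Dia f) /\ label S u /\ ~ present S u f.
Definition step5_call (S S' : sequent) : Prop :=
  exists w f u, present S w (Dia f) /\ label S u /\ ~ present S u f /\
    S' = (fst S, (u, f) :: snd S).

Definition step6_app (S : sequent) : Prop :=
  exists w f, present S w (Stit f) /\ forall u, inCT S w u -> ~ present S u f.
Definition step6_call (S S' : sequent) : Prop :=
  exists w f v, present S w (Stit f) /\ (forall u, inCT S w u -> ~ present S u f) /\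
    ~ label S v /\ S' = ((w, v) :: fst S, (v, f) :: snd S).

Definition step7_app (S : sequent) : Prop :=
  exists w f, present S w (Box f) /\ forall u, label S u -> ~ present S u f.
Definition step7_call (S S' : sequent) : Prop :=
  exists w f v, present S w (Box f) /\ (forall u, label S u -> ~ present S u f) /\
    ~ label S v /\ S' = (fst S, (v, f) :: snd S).

Definition step8_call (n : nat) (S S' : sequent) : Prop :=
  0 < n /\ ~ choice_consistent n S /\
  exists ws : list nat, length ws = Datatypes.S n /\ NoDup ws /\ Forall (is_root S) ws /\
    exists k j, k < j /\ j <= n /\
      S' = ((nth k ws 0, nth j ws 0) :: fst S, snd S).

(* calls n S S' : the computation of Prove_n(S) may make the recursive call
   Prove_n(S'), the steps being tried in order. *)
Definition calls (n : nat) (S S' : sequent) : Prop :=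
  ~ clash S /\ ~ stable n S /\
  (step3_call S S' \/
   (~ step3_app S /\
    (step4_call S S' \/
     (~ step4_app S /\
      (step5_call S S' \/
       (~ step5_app S /\
        (step6_call S S' \/
         (~ step6_app S /\
          (step7_call S S' \/
           (~ step7_app S /\ step8_call n S S')))))))))).

Definition terminates (n : nat) (S : sequent) : Prop :=
  Acc (fun S' S0 => calls n S0 S') S.

(* Main.v *)
Require Import Defs.
From Stdlib Require Import List Arith Relations.
From Stdlib Require Import ClassicalEpsilon Classical Lia.
Import ListNotations.

Definition dec (P : Prop) : bool := if excluded_middle_informative P then true else false.

Lemma dec_true (P : Prop) : dec P = true <-> P.
Proof. unfold dec; destruct (excluded_middle_informative P); split; intros; auto; try discriminate; contradiction. Qed.

Definition card {A} (eqd : forall x y : A, {x=y}+{x<>y}) (L : list A) (P : A -> Prop) : nat :=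
  length (filter (fun x => dec (P x)) (nodup eqd L)).

Lemma card_le {A} eqd (L L' : list A) (P P' : A -> Prop) :
  (forall x, P' x -> P x) -> (forall x, P x -> In x L) -> card eqd L' P' <= card eqd L P.
Proof.
  intros H1 H2. unfold card. apply NoDup_incl_length.
  - apply NoDup_filter, NoDup_nodup.
  - intros x Hx. apply filter_In in Hx as [_ Hx]. apply (proj1 (dec_true _)) in Hx.
    apply filter_In. split; [apply nodup_In; auto | apply (proj2 (dec_true _)); auto].
Qed.

Lemma card_lt {A} eqd (L L' : list A) (P P' : A -> Prop) x0 :
  (forall x, P' x -> P x) -> (forall x, P x -> In x L) -> P x0 -> ~ P' x0 ->
  card eqd L' P' < card eqd L P.
Proof.
  intros H1 H2 H3 H4. unfold card.
  change (length (x0 :: filter (fun x => dec (P' x)) (nodup eqd L')) <=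
          length (filter (fun x => dec (P x)) (nodup eqd L))).
  apply NoDup_incl_length.
  - constructor. intro Hx. apply filter_In in Hx as [_ Hx]. apply (proj1 (dec_true _)) in Hx. auto.
    apply NoDup_filter, NoDup_nodup.
  - intros x [<- | Hx].
    + apply filter_In. split; [apply nodup_In; auto | apply (proj2 (dec_true _)); auto].
    + apply filter_In in Hx as [_ Hx]. apply (proj1 (dec_true _)) in Hx.
      apply filter_In. split; [apply nodup_In; auto | apply (proj2 (dec_true _)); auto].
Qed.

Definition form_eqd : forall x y : form, {x=y}+{x<>y}.
Proof. decide equality; apply Nat.eq_dec. Defined.
Definition pair_eqd : forall x y : nat * form, {x=y}+{x<>y}.
Proof. decide equality; [apply form_eqd | apply Nat.eq_dec]. Defined.

Fixpoint subs (f : form) : list form :=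
  f :: match f with
       | Var _ | NVar _ => []
       | And a b | Or a b => subs a ++ subs b
       | Box a | Dia a | Stit a | CStit a => subs a
       end.

Lemma sub_trans f g : In g (subs f) -> incl (subs g) (subs f).
Proof.
  induction f; simpl; intros [<- | H]; try (apply incl_refl); try contradiction;
  try (apply in_app_or in H as [H|H]);
  [ apply incl_tl, incl_appl | apply incl_tl, incl_appr
  | apply incl_tl, incl_appl | apply incl_tl, incl_appr | ..];
  try (apply incl_tl); auto.
Qed.

Lemma sub_self f : In f (subs f).
Proof. destruct f; simpl; auto. Qed.

Ltac subchild := intros H; apply (sub_trans _ _ H); simpl; right;
  try (apply in_or_app); auto using sub_self.

Lemma sub_and1 phi a b : In (And a b) (subs phi) -> In a (subs phi). Proof. subchild. Qed.
Lemma sub_and2 phi a b : In (And a b) (subs phi) -> In b (subs phi). Proof. subchild. Qed.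
Lemma sub_or1 phi a b : In (Or a b) (subs phi) -> In a (subs phi). Proof. subchild. Qed.
Lemma sub_or2 phi a b : In (Or a b) (subs phi) -> In b (subs phi). Proof. subchild. Qed.
Lemma sub_box phi a : In (Box a) (subs phi) -> In a (subs phi).
Proof. intros H; apply (sub_trans _ _ H); simpl; auto using sub_self. Qed.
Lemma sub_dia phi a : In (Dia a) (subs phi) -> In a (subs phi).
Proof. intros H; apply (sub_trans _ _ H); simpl; auto using sub_self. Qed.
Lemma sub_stit phi a : In (Stit a) (subs phi) -> In a (subs phi).
Proof. intros H; apply (sub_trans _ _ H); simpl; auto using sub_self. Qed.
Lemma sub_cstit phi a : In (CStit a) (subs phi) -> In a (subs phi).
Proof. intros H; apply (sub_trans _ _ H); simpl; auto using sub_self. Qed.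

Definition grows (S S' : sequent) := incl (fst S) (fst S') /\ incl (snd S) (snd S').

Lemma reach_mono (S S' : sequent) : (forall x y, edge S x y -> edge S' x y) ->
  forall x y, reach S x y -> reach S' x y.
Proof.
  intros He x y H. induction H.
  - apply rt_step; auto.
  - apply rt_refl.
  - eapply rt_trans; eauto.
Qed.

Lemma label_mono S S' : grows S S' -> forall x, label S x -> label S' x.
Proof.
  intros [H1 H2] x [[y [E|E]]|[f P]].
  - left; exists y; left; apply H1; exact E.
  - left; exists y; right; apply H1; exact E.
  - right; exists f; apply H2; exact P.
Qed.

Lemma reach_label S r u : reach S r u -> label S r -> label S u.
Proof.
  intros H. induction H; intros; auto.
  left; exists x; right; exact H.
Qed.

Lemma present_label S x f : present S x f -> label S x.
Proof. intros; right; exists f; auto. Qed.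

Definition labs (S : sequent) : list nat :=
  map fst (snd S) ++ map fst (fst S) ++ map snd (fst S).

Lemma label_labs S x : label S x -> In x (labs S).
Proof.
  unfold labs. intros [[y [E|E]]|[f P]]; apply in_or_app.
  - right; apply in_or_app; left. apply (in_map fst) in E; exact E.
  - right; apply in_or_app; right. apply (in_map snd) in E; exact E.
  - left. apply (in_map fst) in P; exact P.
Qed.

Definition Inv (phi : form) (S : sequent) : Prop :=
  (forall x f, present S x f -> In f (subs phi)) /\
  (forall x, label S x -> exists r, is_root S r /\ reach S r x).

Definition m1 phi S := card form_eqd (subs phi) (fun f => In f (subs phi) /\ ~ exists u, present S u f).
Definition m2 phi S := card pair_eqd (list_prod (labs S) (subs phi))
  (fun p => is_root S (fst p) /\ In (snd p) (subs phi) /\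
            ~ exists u, reach S (fst p) u /\ present S u (snd p)).
Definition m3 S := card Nat.eq_dec (labs S) (is_root S).
Definition m4 phi S := card pair_eqd (list_prod (labs S) (subs phi))
  (fun p => label S (fst p) /\ In (snd p) (subs phi) /\ ~ present S (fst p) (snd p)).

Definition lex4 (x y : nat * nat * nat * nat) : Prop :=
  match x, y with (a',b',c',d'), (a,b,c,d) =>
    a' < a \/ (a' <= a /\ (b' < b \/ (b' <= b /\ (c' < c \/ (c' <= c /\ d' < d)))))
  end.

Lemma wf_lex4 : forall a b c d, Acc lex4 (a,b,c,d).
Proof.
  intro a; induction a as [a IHa] using (well_founded_induction lt_wf).
  intro b; induction b as [b IHb] using (well_founded_induction lt_wf).
  intro c; induction c as [c IHc] using (well_founded_induction lt_wf).
  intro d; induction d as [d IHd] using (well_founded_induction lt_wf).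
  constructor. intros [[[a' b'] c'] d'] H. simpl in H.
  destruct (Nat.lt_ge_cases a' a). apply IHa; auto.
  assert (a' = a) by lia. subst a'.
  destruct (Nat.lt_ge_cases b' b). apply IHb; auto.
  assert (b' = b) by lia. subst b'.
  destruct (Nat.lt_ge_cases c' c). apply IHc; auto.
  assert (c' = c) by lia. subst c'.
  apply IHd. lia.
Qed.

Definition mu phi S := (m1 phi S, m2 phi S, m3 S, m4 phi S).
Definition R phi (S' S : sequent) := lex4 (mu phi S') (mu phi S).

Lemma wf_R phi : forall S, Acc (R phi) S.
Proof.
  intro S.
  assert (forall t, Acc lex4 t -> forall S, mu phi S = t -> Acc (R phi) S).
  { intros t H. induction H as [t _ IH]. intros S0 E. constructor. intros S1 H1.
    apply (IH (mu phi S1)); auto. unfold R in H1. rewrite E in H1. exact H1. }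
  apply (H (mu phi S)); auto. destruct (mu phi S) as [[[a b] c] d]. apply wf_lex4.
Qed.

Lemma in_prod_pair (L : list nat) (F : list form) (p : nat * form) :
  In (fst p) L -> In (snd p) F -> In p (list_prod L F).
Proof. destruct p; apply in_prod. Qed.

Lemma typeA phi S S' L : Inv phi S -> S' = (fst S, L ++ snd S) ->
  (forall x f, In (x,f) L -> label S x /\ In f (subs phi)) ->
  (exists x f, In (x,f) L /\ ~ present S x f) ->
  Inv phi S' /\ R phi S' S.
Proof.
  intros [I1 I2] -> HL [x0 [f0 [Hx0 Hn0]]].
  assert (G : grows S (fst S, L ++ snd S)) by (split; simpl; [apply incl_refl | apply incl_appr, incl_refl]).
  set (S' := (fst S, L ++ snd S)) in *.
  assert (LB : forall x, label S' x -> label S x).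
  { intros x [[y E]|[f P]]. left; exists y; exact E.
    unfold present in P; simpl in P. apply in_app_or in P as [P|P].
    apply (HL _ _ P). right; exists f; exact P. }
  assert (RE : forall x y, reach S' x y -> reach S x y).
  { apply reach_mono. auto. }
  assert (RE' : forall x y, reach S x y -> reach S' x y).
  { apply reach_mono. auto. }
  assert (RT : forall r, is_root S' r <-> is_root S r).
  { intros r; split; intros [H1 H2]; split; auto. apply (label_mono _ _ G); auto. }
  assert (PM : forall x f, present S x f -> present S' x f).
  { intros x f P. apply (proj2 G). exact P. }
  split.
  - split.
    + intros x f P. unfold present in P; simpl in P. apply in_app_or in P as [P|P].
      apply (HL _ _ P). eapply I1; exact P.
    + intros x Hx. apply LB in Hx. destruct (I2 x Hx) as [r [Hr Hrx]].
      exists r. split. apply RT; auto. auto.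
  - unfold R, mu, lex4.
    assert (A1 : m1 phi S' <= m1 phi S).
    { apply card_le. intros f [H1 H2]; split; auto. intros [u Hu]; apply H2; exists u; auto.
      intros f [H _]; auto. }
    assert (A2 : m2 phi S' <= m2 phi S).
    { apply card_le.
      intros p [H1 [H2 H3]]; split; [apply RT; auto | split; auto].
      intros [u [Hu1 Hu2]]; apply H3; exists u; auto.
      intros p [H1 [H2 _]]. apply in_prod_pair; auto. apply label_labs, H1. }
    assert (A3 : m3 S' <= m3 S).
    { apply card_le. intros r H; apply RT; auto. intros r H; apply label_labs, H. }
    assert (A4 : m4 phi S' < m4 phi S).
    { apply (card_lt _ _ _ _ _ (x0, f0)).
      intros p [H1 [H2 H3]]; split; [auto | split; auto].
      intros p [H1 [H2 _]]. apply in_prod_pair; auto. apply label_labs, H1.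
      simpl. split. apply HL in Hx0; tauto. split. apply HL in Hx0; tauto. auto.
      simpl. intros [_ [_ Hq]]. apply Hq. unfold present; simpl. apply in_or_app; auto. }
    lia.
Qed.

Lemma step6_ok phi S S' : Inv phi S -> step6_call S S' -> Inv phi S' /\ R phi S' S.
Proof.
  intros [I1 I2] [w [f [v [Hw [Hn [Hv ->]]]]]].
  set (S' := ((w, v) :: fst S, (v, f) :: snd S)).
  assert (G : grows S S') by (split; simpl; apply incl_tl, incl_refl).
  assert (Hf : In f (subs phi)) by (eapply sub_stit, I1, Hw).
  assert (Lw : label S w) by (eapply present_label; eauto).
  assert (LB : forall x, label S' x -> x = v \/ label S x).
  { intros x [[y [E|E]]|[g P]].
    - destruct E as [E|E]. inversion E; subst; auto. right; left; exists y; left; auto.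
    - destruct E as [E|E]. inversion E; subst; auto. right; left; exists y; right; auto.
    - destruct P as [P|P]. inversion P; subst; auto. right; right; exists g; auto. }
  assert (RE' : forall x y, reach S x y -> reach S' x y).
  { apply reach_mono. intros; apply (proj1 G); auto. }
  assert (RT : forall r, is_root S' r <-> is_root S r).
  { intros r; split; intros [H1 H2]; split.
    - destruct (LB r H1) as [->|]; auto. exfalso; apply (H2 w); left; auto.
    - intros x E; apply (H2 x); right; auto.
    - apply (label_mono _ _ G); auto.
    - intros x [E|E]. inversion E; subst; auto. apply (H2 x); auto. }
  destruct (I2 w Lw) as [r0 [Hr0 Hr0w]].
  split.
  - split.
    + intros x g [P|P]. inversion P; subst; auto. eapply I1; exact P.
    + intros x Hx. destruct (LB x Hx) as [->|Hx'].
      * exists r0. split. apply RT; auto. eapply rt_trans. apply RE'; eauto. apply rt_step; left; auto.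
      * destruct (I2 x Hx') as [r [Hr Hrx]]. exists r. split. apply RT; auto. auto.
  - unfold R, mu, lex4.
    assert (A1 : m1 phi S' <= m1 phi S).
    { apply card_le. intros g [H1 H2]; split; auto. intros [u Hu]; apply H2; exists u; apply (proj2 G); auto.
      intros g [H _]; auto. }
    assert (A2 : m2 phi S' < m2 phi S).
    { apply (card_lt _ _ _ _ _ (r0, f)).
      intros p [H1 [H2 H3]]; split; [apply RT; auto | split; auto].
      intros [u [Hu1 Hu2]]; apply H3; exists u; split; [apply RE'; auto | apply (proj2 G); auto].
      intros p [H1 [H2 _]]. apply in_prod_pair; auto. apply label_labs, H1.
      simpl. split; auto. split; auto. intros [u [Hu1 Hu2]]. apply (Hn u); auto.
      exists r0; auto.
      simpl. intros [_ [_ Hq]]. apply Hq. exists v. split.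
      eapply rt_trans. apply RE'; eauto. apply rt_step; left; auto. left; auto. }
    lia.
Qed.

Lemma step7_ok phi S S' : Inv phi S -> step7_call S S' -> Inv phi S' /\ R phi S' S.
Proof.
  intros [I1 I2] [w [f [v [Hw [Hn [Hv ->]]]]]].
  set (S' := (fst S, (v, f) :: snd S)).
  assert (G : grows S S') by (split; simpl; [apply incl_refl | apply incl_tl, incl_refl]).
  assert (Hf : In f (subs phi)) by (eapply sub_box, I1, Hw).
  assert (LB : forall x, label S' x -> x = v \/ label S x).
  { intros x [[y E]|[g P]].
    - right; left; exists y; auto.
    - destruct P as [P|P]. inversion P; subst; auto. right; right; exists g; auto. }
  assert (RE' : forall x y, reach S x y -> reach S' x y).
  { apply reach_mono. auto. }
  split.
  - split.
    + intros x g [P|P]. inversion P; subst; auto. eapply I1; exact P.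
    + intros x Hx. destruct (LB x Hx) as [->|Hx'].
      * exists v. split; [|apply rt_refl]. split. right; exists f; left; auto.
        intros y E. apply Hv. left; exists y; right; exact E.
      * destruct (I2 x Hx') as [r [[Hr1 Hr2] Hrx]]. exists r. split; auto.
        split; auto. apply (label_mono _ _ G); auto.
  - unfold R, mu, lex4.
    assert (A1 : m1 phi S' < m1 phi S).
    { apply (card_lt _ _ _ _ _ f).
      intros g [H1 H2]; split; auto. intros [u Hu]; apply H2; exists u; apply (proj2 G); auto.
      intros g [H _]; auto.
      split; auto. intros [u Hu]. apply (Hn u); auto. eapply present_label; eauto.
      intros [_ Hq]. apply Hq. exists v. left; auto. }
    lia.
Qed.

Lemma step8_ok n phi S S' : Inv phi S -> step8_call n S S' -> Inv phi S' /\ R phi S' S.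
Proof.
  intros [I1 I2] [_ [_ [ws [Hl [Hnd [Hfa [k [j [Hkj [Hjn ->]]]]]]]]]].
  set (a := nth k ws 0) in *. set (b := nth j ws 0) in *.
  assert (Ra : is_root S a). { eapply Forall_forall; eauto. apply nth_In; lia. }
  assert (Rb : is_root S b). { eapply Forall_forall; eauto. apply nth_In; lia. }
  assert (Hab : a <> b).
  { intro E. apply (proj1 (NoDup_nth ws 0)) with (i:=k) (j:=j) in Hnd; auto; lia. }
  set (S' := ((a, b) :: fst S, snd S)).
  assert (G : grows S S') by (split; simpl; [apply incl_tl, incl_refl | apply incl_refl]).
  assert (LB : forall x, label S' x -> label S x).
  { intros x [[y [E|E]]|[g P]].
    - destruct E as [E|E]. inversion E; subst; apply Ra. left; exists y; left; auto.
    - destruct E as [E|E]. inversion E; subst; apply Rb. left; exists y; right; auto.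
    - right; exists g; auto. }
  assert (RE' : forall x y, reach S x y -> reach S' x y).
  { apply reach_mono. intros; apply (proj1 G); auto. }
  assert (RT : forall r, is_root S' r -> is_root S r).
  { intros r [H1 H2]; split; auto. intros x E; apply (H2 x); right; auto. }
  assert (RT' : forall r, is_root S r -> r <> b -> is_root S' r).
  { intros r [H1 H2] Hrb; split. apply (label_mono _ _ G); auto.
    intros x [E|E]. inversion E; subst; auto. apply (H2 x); auto. }
  split.
  - split.
    + intros x g P. eapply I1; exact P.
    + intros x Hx. apply LB in Hx. destruct (I2 x Hx) as [r [Hr Hrx]].
      destruct (Nat.eq_dec r b) as [->|Hrb].
      * exists a. split. apply RT'; auto. eapply rt_trans. apply rt_step; left; reflexivity. apply RE'; auto.
      * exists r. split; auto.
  - unfold R, mu, lex4.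
    assert (A1 : m1 phi S' <= m1 phi S).
    { apply card_le. intros g [H1 H2]; split; auto. intros g [H _]; auto. }
    assert (A2 : m2 phi S' <= m2 phi S).
    { apply card_le.
      intros p [H1 [H2 H3]]; split; [apply RT; auto | split; auto].
      intros [u [Hu1 Hu2]]; apply H3; exists u; split; [apply RE'; auto | auto].
      intros p [H1 [H2 _]]. apply in_prod_pair; auto. apply label_labs, H1. }
    assert (A3 : m3 S' < m3 S).
    { apply (card_lt _ _ _ _ _ b). auto. intros r H; apply label_labs, H. auto.
      intros [_ Hq]. apply (Hq a). left; reflexivity. }
    lia.
Qed.

Lemma calls_ok n phi S S' : Inv phi S -> calls n S S' -> Inv phi S' /\ R phi S' S.
Proof.
  intros I H. pose proof I as [I1 I2].
  destruct H as [_ [_ H]].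
  destruct H as [H3 | [_ [H4 | [_ [H5 | [_ [H6 | [_ [H7 | [_ H8]]]]]]]]]].
  - destruct H3 as [w [[a [b [[Ho Hn] ->]]] | [_ [a [b [[Ha [Hna Hnb]] HS]]]]]].
    + apply (typeA phi S _ [(w,a);(w,b)] I); auto.
      * intros x f [E|[E|[]]]; inversion E; subst; split; eauto using present_label;
          [eapply sub_or1 | eapply sub_or2]; eapply I1; eauto.
      * destruct (classic (present S w a)).
        exists w, b. split. right; left; auto. intro; apply Hn; auto.
        exists w, a. split. left; auto. auto.
    + destruct HS as [-> | ->].
      * apply (typeA phi S _ [(w,a)] I); auto.
        intros x f [E|[]]; inversion E; subst; split; eauto using present_label.
        eapply sub_and1; eapply I1; eauto.
        exists w, a; split; [left|]; auto.
      * apply (typeA phi S _ [(w,b)] I); auto.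
        intros x f [E|[]]; inversion E; subst; split; eauto using present_label.
        eapply sub_and2; eapply I1; eauto.
        exists w, b; split; [left|]; auto.
  - destruct H4 as [w [f [u [Hw [Hct [Hn ->]]]]]].
    apply (typeA phi S _ [(u,f)] I); auto.
    + intros x g [E|[]]; inversion E; subst; split.
      destruct Hct as [r [[Hr _] [_ Hru]]]. eapply reach_label; eauto.
      eapply sub_cstit; eapply I1; eauto.
    + exists u, f; split; [left|]; auto.
  - destruct H5 as [w [f [u [Hw [Hl [Hn ->]]]]]].
    apply (typeA phi S _ [(u,f)] I); auto.
    + intros x g [E|[]]; inversion E; subst; split; auto.
      eapply sub_dia; eapply I1; eauto.
    + exists u, f; split; [left|]; auto.
  - apply step6_ok; auto.
  - apply step7_ok; auto.
  - eapply step8_ok; eauto.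
Qed.

Lemma terminates_inv n phi : forall S, Inv phi S -> terminates n S.
Proof.
  intros S. induction (wf_R phi S) as [S _ IH]. intros I.
  constructor. intros S' Hc. destruct (calls_ok n phi S S' I Hc) as [I' HR].
  apply IH; auto.
Qed.

Theorem theorem6 (n : nat) (phi : form) (w : nat) :
  terminates n (nil, (w, phi) :: nil).
Proof.
  apply (terminates_inv n phi). split.
  - intros x f [E|[]]. inversion E; subst. apply sub_self.
  - intros x [[y [[]|[]]]|[f [E|[]]]]. inversion E; subst.
    exists x. split; [|apply rt_refl]. split. right; exists f; left; auto.
    intros y [].
Qed.
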